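(* Let $(\mathcal{S},\mathcal{T})$ be an $r$-maximal cross-intersecting pair in $\binom{[n]}{\leq r}$. Then $(\phi^{-1}(\mathcal{S}),\phi^{-1}(\mathcal{T}))$ is a stable cross-intersecting pair of families in $\mathcal{I}_{n,k}^{r}$.
   Context: $\Gamma_{n,k}$ is the disjoint union of $n$ copies of $K_k$, with vertices $(i,j)$, $i\in[n]$, $j\in[k]$; $\mathcal{I}_{n,k}^r$ is the set of its independent sets of size $r$. $\binom{[n]}{\le r}$ is the set of subsets of $[n]$ of size at most $r$. $\phi(X)=\{i:(i,1)\in X\}$ for $X\in\mathcal{I}_{n,k}^r$, and $\phi^{-1}(\mathcal{X})=\{A\in\mathcal{I}_{n,k}^r:\phi(A)\in\mathcal{X}\}$. A pair of non-empty families is cross-intersecting if each member of the first meets each member of the second. A cross-intersecting pair $(\mathcal{S},\mathcal{T})$ in $\binom{[n]}{\le r}$ is $r$-maximal if whenever $(\mathcal{V},\mathcal{W})$ is a cross-intersecting pair in $\binom{[n]}{\le r}$ with $\mathcal{S}\subseteq\mathcal{V}$, $\mathcal{T}\subseteq\mathcal{W}$, then $(\mathcal{V},\mathcal{W})=(\mathcal{S},\mathcal{T})$. For $i\in[n],s\in[2,k]$: $P_{i,s}(X)=(X\setminus\{(i,s)\})\cup\{(i,1)\}$ if $(i,s)\in X$, else $X$; $\pi_{i,s}(\mathcal{F})=\{P_{i,s}(X):X\in\mathcal{F}\}\cup\{X\in\mathcal{F}:P_{i,s}(X)\in\mathcal{F}\}$; a family is stable if $\pi_{i,s}(\mathcal{F})=\mathcal{F}$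 for all $i\in[n],s\in[2,k]$, and a pair is stable if both families are. *)

(* Defs.v *)
(* Vertices of Gamma_{n,k}: pairs (i,j) : 'I_n * 'I_k,
   0-indexed, so the paper's (i,1) is (i, 0) here and s in [2,k] is 0 < s. *)
From mathcomp Require Import all_boot.
Set Implicit Arguments. Unset Strict Implicit. Unset Printing Implicit Defensive.

Section Defs.
Variables n k : nat.

Definition vertex := ('I_n * 'I_k)%type.

(* adjacency in Gamma_{n,k}: same copy of K_k, distinct vertices *)
Definition gamma_adj (u v : vertex) : bool := (u.1 == v.1) && (u.2 != v.2).

Definition independent (X : {set vertex}) : bool :=
  [forall u in X, forall v in X, ~~ gamma_adj u v].

Definition indep_sets (r : nat) : {set {set vertex}} :=
  [set X : {set vertex} | independent X && (#|X| == r)].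

Definition low_sets (r : nat) : {set {set 'I_n}} :=
  [set A : {set 'I_n} | #|A| <= r].

Definition phi (X : {set vertex}) : {set 'I_n} :=
  [set i | [exists j : 'I_k, (val j == 0) && ((i, j) \in X)]].

Definition phi_inv (r : nat) (F : {set {set 'I_n}}) : {set {set vertex}} :=
  [set A in indep_sets r | phi A \in F].

Definition cross_intersecting (T : finType) (A B : {set {set T}}) : Prop :=
  [/\ A != set0, B != set0 &
      forall a b, a \in A -> b \in B -> a :&: b != set0].

Definition r_maximal (r : nat) (S T : {set {set 'I_n}}) : Prop :=
  [/\ S \subset low_sets r, T \subset low_sets r, cross_intersecting S T &
      forall V W : {set {set 'I_n}}, V \subset low_sets r -> W \subset low_sets r ->
        cross_intersecting V W -> S \subset V -> T \subset W ->
        V = S /\ W = T].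

(* the element "1" of [k], built from any s : 'I_k *)
Definition first_of (s : 'I_k) : 'I_k :=
  Ordinal (leq_ltn_trans (leq0n s) (ltn_ord s)).

Definition shiftP (i : 'I_n) (s : 'I_k) (X : {set vertex}) : {set vertex} :=
  if (i, s) \in X then (X :\ (i, s)) :|: [set (i, first_of s)] else X.

Definition shift_pi (i : 'I_n) (s : 'I_k) (F : {set {set vertex}}) :
  {set {set vertex}} :=
  [set shiftP i s X | X in F] :|: [set X in F | shiftP i s X \in F].

Definition stable (F : {set {set vertex}}) : Prop :=
  forall (i : 'I_n) (s : 'I_k), 0 < val s -> shift_pi i s F = F.

End Defs.

(* Main.v *)
Require Import Defs.
From mathcomp Require Import all_boot.
Set Implicit Arguments. Unset Strict Implicit. Unset Printing Implicit Defensive.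

Section Aux.
Variables n k : nat.

Lemma indepP (X : {set vertex n k}) :
  reflect (forall u v, u \in X -> v \in X -> u.1 = v.1 -> u = v) (independent X).
Proof.
apply: (iffP forall_inP) => H.
  move=> u v Hu Hv E; have := forall_inP (H u Hu) v Hv.
  rewrite /gamma_adj E eqxx /= negbK => /eqP E2.
  by case: u v E E2 {Hu Hv H} => [? ?] [? ?] /= -> ->.
move=> u Hu; apply/forall_inP => v Hv; rewrite /gamma_adj.
by apply/negP=> /andP[/eqP E /eqP N]; apply N; rewrite (H u v Hu Hv E).
Qed.

Lemma phiP (X : {set vertex n k}) (z : 'I_k) (i : 'I_n) : val z = 0 ->
  (i \in phi X) = ((i, z) \in X).
Proof.
move=> z0; rewrite inE; apply/existsP/idP.
  case=> j /andP[/eqP j0 H]; have -> : z = j by apply: val_inj; rewrite z0 j0.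
  done.
by move=> H; exists z; rewrite z0 eqxx.
Qed.

Lemma phi_card (X : {set vertex n k}) (z : 'I_k) : val z = 0 -> #|phi X| <= #|X|.
Proof.
move=> z0.
have inj : injective (fun i : 'I_n => (i, z)) by move=> a b [].
rewrite -(card_imset (phi X) inj); apply: subset_leq_card.
by apply/subsetP => u /imsetP [i Hi ->]; rewrite -(phiP _ _ z0).
Qed.

Definition upclosed r (S : {set {set 'I_n}}) :=
  forall A B : {set 'I_n}, A \in S -> A \subset B -> #|B| <= r -> B \in S.

Lemma ci_sym (T : finType) (A B : {set {set T}}) :
  cross_intersecting A B -> cross_intersecting B A.
Proof. by case=> h1 h2 h3; split=> // a b ha hb; rewrite setIC; apply: h3. Qed.

Lemma rmax_sym r (S T : {set {set 'I_n}}) : r_maximal r S T -> r_maximal r T S.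
Proof.
case=> h1 h2 h3 h4; split=> //; first exact: ci_sym.
move=> V W hV hW hc hTV hSW.
by case: (h4 W V hW hV (ci_sym hc) hSW hTV).
Qed.

Lemma rmax_up r (S T : {set {set 'I_n}}) : r_maximal r S T -> upclosed r S.
Proof.
case=> h1 h2 [hS hT hc] h4 A B hA hAB hB.
have := h4 (B |: S) T _ h2 _ _ (subxx T).
case.
- apply/subsetP => C; rewrite in_setU1 => /orP [/eqP -> | HC].
    by rewrite inE.
  exact: (subsetP h1).
- split=> //.
    by apply/set0Pn; exists B; rewrite in_setU1 eqxx.
  move=> a b; rewrite in_setU1 => /orP [/eqP -> | ha] hb; last exact: hc.
  have := hc A b hA hb; apply: contra => /eqP E; rewrite -subset0 -E.
  by apply: setSI.
- by apply/subsetP => C HC; rewrite in_setU1 HC orbT.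
by move=> <- _; rewrite in_setU1 eqxx.
Qed.

Lemma extend_set r (A : {set 'I_n}) : #|A| <= r -> r <= n ->
  exists B : {set 'I_n}, A \subset B /\ #|B| = r.
Proof.
move=> hA hr.
have [m hm] : exists m, r = m + #|A| by exists (r - #|A|); rewrite subnK.
elim: m A hm {hA} => [|m IH] A hm; first by exists A; rewrite hm.
have hlt : #|A| < n by apply: leq_trans hr; rewrite hm addSn ltnS leq_addl.
have : ~~ ([set: 'I_n] \subset A).
  apply/negP => /subset_leq_card; rewrite cardsT card_ord => h.
  by move: (leq_trans hlt h); rewrite ltnn.
move/subsetPn => [x _ hx].
have hm' : r = m + #|x |: A| by rewrite cardsU1 hx hm /= add1n addnS addSn.
have [B [h1 h2]] := IH (x |: A) hm'.
by exists B; split=> //; apply: subset_trans h1; apply: subsetUr.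
Qed.

Lemma phi_inv_nonempty r (S : {set {set 'I_n}}) : 0 < k -> r <= n ->
  S \subset low_sets n r -> S != set0 -> upclosed r S -> phi_inv k r S != set0.
Proof.
move=> hk hr hlow /set0Pn [A hA] hup.
have hAr : #|A| <= r by have := subsetP hlow A hA; rewrite inE.
have [B [hAB hB]] := extend_set hAr hr.
have hBS : B \in S by apply: (hup A) => //; rewrite hB.
pose z : 'I_k := Ordinal hk.
have z0 : val z = 0 by [].
have inj : injective (fun i : 'I_n => (i, z)) by move=> a b [].
set X := [set (i, z) | i in B].
have hphi : phi X = B.
  by apply/setP => i; rewrite (phiP _ _ z0) (mem_imset _ _ inj).
apply/set0Pn; exists X; rewrite !inE hphi hBS andbT.
apply/andP; split; last by rewrite card_imset // hB.
apply/indepP => u v /imsetP [a _ ->] /imsetP [b _ ->] /= ->; done.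
Qed.

Lemma stable_up r (S : {set {set 'I_n}}) : upclosed r S -> stable (phi_inv k r S).
Proof.
move=> hup i s hs.
set F := phi_inv k r S.
have H : forall X, X \in F -> shiftP i s X \in F.
  move=> X; rewrite !inE => /andP [/andP [hind /eqP hcard] hphi].
  rewrite /shiftP; case: ifP => hin; last by rewrite hind hcard eqxx.
  set z := first_of s.
  have z0 : val z = 0 by [].
  have sz : s != z by apply/eqP => E; move: hs; rewrite E z0.
  have hc : (i, z) \notin X.
    apply/negP => hc; have := indepP _ hind (i, s) (i, z) hin hc erefl.
    by case=> /eqP; rewrite (negbTE sz).
  set Y := X :\ (i, s) :|: [set (i, z)].
  have hindY : independent Y.
    apply/indepP => u v; rewrite /Y !inE.
    have key : forall w, w \in X -> w.1 = i -> w = (i, s).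
      by move=> w hw E; apply: (indepP _ hind) => //.
    move=> /orP [/andP [hu1 hu2] | /eqP ->] /orP [/andP [hv1 hv2] | /eqP ->] //=.
    - by apply: (indepP _ hind).
    - by move=> E; move: hu1; rewrite (key u hu2 E) eqxx.
    - by move=> E; move: hv1; rewrite (key v hv2 (esym E)) eqxx.
  have hcardY : #|Y| = r.
    rewrite /Y setUC cardsU1 inE negb_and hc orbT add1n.
    by rewrite -hcard (cardsD1 (i, s) X) hin.
  rewrite hindY hcardY eqxx /=.
  apply: (hup (phi X)) => //.
    apply/subsetP => j; rewrite !(phiP _ _ z0) => hj.
    rewrite /Y !inE hj andbT; apply/orP; left.
    by apply/eqP => -[_ E]; move: sz; rewrite -E eqxx.
  by rewrite -hcardY (phi_card _ z0).
apply/eqP; rewrite eqEsubset; apply/andP; split; apply/subsetP => Y.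
  rewrite /shift_pi in_setU => /orP [/imsetP [X HX ->] | ]; first exact: H.
  by rewrite inE => /andP [].
by move=> HY; rewrite /shift_pi in_setU inE HY (H Y HY) orbT.
Qed.

End Aux.

Theorem lemma4p5 (n k r : nat) (hk : 0 < k) (hrn : r <= n)
  (S T : {set {set 'I_n}}) :
  r_maximal r S T ->
  [/\ phi_inv k r S \subset indep_sets n k r,
      phi_inv k r T \subset indep_sets n k r,
      cross_intersecting (phi_inv k r S) (phi_inv k r T),
      stable (phi_inv k r S) & stable (phi_inv k r T)].
Proof.
move=> hmax.
have upS := rmax_up hmax.
have upT := rmax_up (rmax_sym hmax).
case: hmax => hlS hlT [hS hT hc] _.
split.
- by apply/subsetP => X; rewrite inE => /andP [].
- by apply/subsetP => X; rewrite inE => /andP [].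
- split; first exact: phi_inv_nonempty.
    exact: phi_inv_nonempty.
  move=> a b; rewrite !inE => /andP [_ ha] /andP [_ hb].
  have /set0Pn [i] := hc _ _ ha hb.
  pose z : 'I_k := Ordinal hk.
  have z0 : val z = 0 by [].
  rewrite inE !(phiP _ _ z0) => /andP [h1 h2].
  by apply/set0Pn; exists (i, z); rewrite inE h1 h2.
- exact: stable_up upS.
- exact: stable_up upT.
Qed.
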